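(* Let $(X,d,A)$ be a metric pair and let $p\in[1,\infty]$. Then the following are equivalent: (i) for every $\alpha,\beta\in\overline{D}_p(X,A)$ with $W_p(\alpha,\beta)<\infty$ there exists an optimal matching $\sigma\in\overline{D}(X\times X,A\times A)$ of $\alpha$ and $\beta$; (ii) $A$ is distance minimizing, i.e. for each $x\in X$ with $d(x,A)<\infty$ there exists $a\in A$ with $d(x,A)=d(x,a)$.
   Context: A metric on a set $X$ is a map $d:X\times X\to[0,\infty]$ with $d(x,x)=0$, $d(x,y)=d(y,x)$ and $d(x,z)\le d(x,y)+d(y,z)$; infinite distances are allowed and $d(x,y)=0$ need not imply $x=y$. A metric pair $(X,d,A)$ is a metric space $(X,d)$ together with a closed subset $A\subset X$. Write $d(x,A)=\inf_{a\in A}d(x,a)$ and, for $\delta\in(0,\infty]$, $A^\delta=\{x\in X: d(x,A)<\delta\}$. A (countable) persistence diagram $\alpha\in\overline{D}(X,A)$ is a function $\hat\alpha:X\setminus A\to\mathbb{Z}_{\ge0}$ with countable support, written as a formal sum $\hat\alpha=\sum_{i\in I}x_i$ ($I$ countable, $x_i\in X\setminus A$, repetitions allowed); equivalently, a countable formal sum of points of $X$ modulo formal sums of points of $A$. $0$ denotes the empty diagram, $|\alpha|=|I|$. Similarly $\overline{D}(X\times X,A\times A)$ consists of countable formal sums of points of $(X\times X)\setminus(A\times A)$. Given $\hat\alpha=\sum_{i\in I}x_i$ and $\hat\beta=\sum_{j\in J}y_j$, a matching of $\alpha$ and $\beta$ is an element $\sigma$ of the form $\hat\sigma=\sum_{k\in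 K}(x_k,y_{\varphi(k)})+\sum_{i\in I\setminus K}(x_i,z_i)+\sum_{j\in J\setminus\varphi(K)}(w_j,y_j)$ for some $K\subset I$, injection $\varphi:K\to J$, and points $z_i,w_j\in A$. Writing $\hat\sigma=\sum_{l\in L}(u_l,v_l)$, its $p$-cost is $\mathrm{Cost}_p(\sigma)=\|(d(u_l,v_l))_{l\in L}\|_p\in[0,\infty]$ (the $\ell^p$ norm, sup norm if $p=\infty$). The $p$-Wasserstein distance is $W_p(\alpha,\beta)=\inf_\sigma\mathrm{Cost}_p(\sigma)$ over all matchings; an optimal matching is one with $\mathrm{Cost}_p(\sigma)=W_p(\alpha,\beta)$. For $\alpha$ and $\delta\in(0,\infty]$, the $\delta$-upper part $u_\delta(\alpha)$ is the restriction of $\hat\alpha$ to $X\setminus A^\delta$ and the $\delta$-lower part $\ell_\delta(\alpha)$ is the restriction to $A^\delta\setminus A$. For $p\in[1,\infty)$, $\overline{D}_p(X,A)=\{\alpha\in\overline{D}(X,A): |u_\infty(\alpha)|<\infty,\ W_p(\ell_\infty(\alpha),0)<\infty\}$; and $\overline{D}_\infty(X,A)=\{\alpha: |u_\delta(\alpha)|<\infty\text{ for all }\delta>0\}$. *)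

(* Defs.v *)
From HB Require Import structures.
From mathcomp Require Import all_boot all_order all_algebra.
From mathcomp Require Import all_classical all_reals.
From mathcomp Require Import ereal esum exp.
Set Implicit Arguments. Unset Strict Implicit. Unset Printing Implicit Defensive.
Import Order.TTheory GRing.Theory Num.Theory.
Local Open Scope classical_set_scope.
Local Open Scope ring_scope.
Local Open Scope ereal_scope.

Section PersistenceDiagrams.
Variables (R : realType) (X : Type).

(* extended pseudometric: values in [0, +oo] *)
Definition is_metric (d : X -> X -> \bar R) : Prop :=
  [/\ forall x y, 0 <= d x y,
      forall x, d x x = 0,
      forall x y, d x y = d y x &
      forall x y z, d x z <= d x y + d y z].

(* d(x,A) = inf_{a in A} d(x,a)  (= +oo if A is empty) *)
Definition distA (d : X -> X -> \bar R) (A : set X) (x : X) : \bar R :=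
  ereal_inf [set d x a | a in A].

(* closed for the (extended pseudo)metric topology: closure A = {x | d(x,A) = 0} *)
Definition metric_closed (d : X -> X -> \bar R) (A : set X) : Prop :=
  forall x, distA d A x = 0 -> A x.

Definition metric_pair d A := is_metric d /\ metric_closed d A.

(* A countable persistence diagram, given as a formal sum sum_{i in I} x_i,
   with index set I a subset of nat (any countable index set), points
   x_i in X \ A, each point occurring finitely often (multiplicities in Z>=0). *)
Record diagram := Diagram { dI : set nat ; dpt : nat -> X }.

Definition is_diagram (A : set X) (al : diagram) : Prop :=
  (forall i, dI al i -> ~ A (dpt al i)) /\
  (forall y, finite_set [set i | dI al i /\ dpt al i = y]).

Variables (d : X -> X -> \bar R) (A : set X).

(* the empty diagram 0 (the point function is irrelevant) *)
Definition zero_like (al : diagram) : diagram := Diagram set0 (dpt al).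

Definition upper_part (delta : \bar R) (al : diagram) : diagram :=
  Diagram [set i | dI al i /\ delta <= distA d A (dpt al i)] (dpt al).

Definition lower_part (delta : \bar R) (al : diagram) : diagram :=
  Diagram [set i | dI al i /\ distA d A (dpt al i) < delta] (dpt al).

(* Data of a matching of al = sum_{i in I} x_i and be = sum_{j in J} y_j :
   K subset of I, injection phi : K -> J, points z_i (i in I \ K) and
   w_j (j in J \ phi(K)) of A. *)
Record matching := Matching {
  mK : set nat ; mphi : nat -> nat ; mz : nat -> X ; mw : nat -> X }.

Definition is_matching (al be : diagram) (m : matching) : Prop :=
  [/\ mK m `<=` dI al,
      (forall i j, mK m i -> mK m j -> mphi m i = mphi m j -> i = j),
      mphi m @` mK m `<=` dI be,
      (forall i, dI al i -> ~ mK m i -> A (mz m i)) &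
      (forall j, dI be j -> ~ (mphi m @` mK m) j -> A (mw m j))].

(* the index set L of the formal sum sigma = sum_{l in L} (u_l, v_l) *)
Definition mL (al be : diagram) (m : matching) : set (nat + nat + nat) :=
  [set l | match l with
           | inl (inl k) => mK m k
           | inl (inr i) => dI al i /\ ~ mK m i
           | inr j => dI be j /\ ~ (mphi m @` mK m) j
           end].

Definition mpair (al be : diagram) (m : matching) (l : nat + nat + nat) : X * X :=
  match l with
  | inl (inl k) => (dpt al k, dpt be (mphi m k))
  | inl (inr i) => (dpt al i, mz m i)
  | inr j => (mw m j, dpt be j)
  end.

Definition lpnorm {T : choiceType} (p : \bar R) (S : set T) (c : T -> \bar R)
    : \bar R :=
  match p with
  | r%:E => (\esum_(l in S) (c l `^ r)) `^ (r^-1)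
  | +oo => ereal_sup ([set 0] `|` (c @` S))
  | -oo => 0
  end.

Definition cost (p : \bar R) (al be : diagram) (m : matching) : \bar R :=
  lpnorm p (mL al be m) (fun l => d (mpair al be m l).1 (mpair al be m l).2).

Definition Wp (p : \bar R) (al be : diagram) : \bar R :=
  ereal_inf [set cost p al be m | m in is_matching al be].

Definition optimal_matching (p : \bar R) (al be : diagram) (m : matching) :=
  is_matching al be m /\ cost p al be m = Wp p al be.

Definition in_Dp (p : \bar R) (al : diagram) : Prop :=
  is_diagram A al /\
  match p with
  | +oo => forall delta : R, (0 < delta)%R ->
             finite_set (dI (upper_part delta%:E al))
  | _ => finite_set (dI (upper_part +oo al)) /\
         Wp p (lower_part +oo al) (zero_like (lower_part +oo al)) < +oo
  end.

Definition distance_minimizing : Prop :=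
  forall x, distA d A x < +oo -> exists2 a, A a & distA d A x = d x a.

End PersistenceDiagrams.

(* Main.v *)
Require Import Defs.
From HB Require Import structures.
From mathcomp Require Import all_boot all_order all_algebra.
From mathcomp Require Import all_classical all_reals.
From mathcomp Require Import ereal esum exp.
From mathcomp Require Import lra.
Import Order.TTheory GRing.Theory Num.Theory.
Local Open Scope classical_set_scope.
Local Open Scope ring_scope.
Local Open Scope ereal_scope.

Section lp.
Variable R : realType.

Lemma esum_subset (T : choiceType) (A B : set T) (a : T -> \bar R) :
  A `<=` B -> \esum_(i in A) a i <= \esum_(i in B) a i.
Proof.
move=> AB; apply: le_ereal_sup => x [X [fX XA] <-]; exists X => //.
by split => //; exact: subset_trans XA AB.
Qed.

Lemma lpnorm_ge0 (T : choiceType) (p : \bar R) (S : set T) c :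
  0 <= lpnorm p S c.
Proof.
case: p => [r| |] /=; first exact: poweR_ge0.
  by apply: ereal_sup_ubound; left.
by [].
Qed.

Lemma lpnorm_set1 (T : choiceType) (p : \bar R) (l : T) c :
  1 <= p -> 0 <= c l -> lpnorm p [set l] c = c l.
Proof.
case: p => [r| |] //= hp c0.
  have r0 : r != 0%R by rewrite lee_fin in hp; apply/negP => /eqP r0; move: hp; rewrite r0 ler10.
  by rewrite esum_set1 ?poweR_ge0 // -poweRrM mulfV // poweRe1.
rewrite image_set1; apply/le_anti/andP; split.
  by apply: ge_ereal_sup => x [->|->].
by apply: ereal_sup_ubound; right.
Qed.

Lemma lpnorm_le (T T' : choiceType) (p : \bar R) (F : set T) (S : set T')
    (psi : T -> T') c c' :
  1 <= p -> set_inj F psi -> psi @` F `<=` S ->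
  (forall l, 0 <= c' l) -> (forall l, F l -> 0 <= c l) ->
  (forall l, F l -> c l <= c' (psi l)) -> lpnorm p F c <= lpnorm p S c'.
Proof.
case: p => [r| |] //= hp inj FS c'0 c0 cc'.
  have r0 : (0 <= r)%R by rewrite lee_fin in hp; apply: le_trans hp.
  have e0 : forall (U : choiceType) (B : set U) (f : U -> \bar R),
      \esum_(i in B) f i `^ r \in `[0%R, +oo].
    by move=> U B f; rewrite in_itv /= leey andbT esum_ge0 // => *; exact: poweR_ge0.
  apply: gt0_ler_poweR; [by rewrite invr_ge0|exact: e0|exact: e0|].
  apply: (@le_trans _ _ (\esum_(i in F) (c' (psi i)) `^ r)).
    apply: le_esum => l Fl; apply: gt0_ler_poweR => //.
    - by rewrite in_itv /= leey andbT c0.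
    - by rewrite in_itv /= leey andbT c'0.
    - exact: cc'.
  by rewrite -(esum_image F psi (fun x => c' x `^ r)) //; exact: esum_subset.
apply: ge_ereal_sup => x [->|[l Fl <-]]; first by apply: ereal_sup_ubound; left.
apply: le_trans (cc' _ Fl) _; apply: ereal_sup_ubound; right; exists (psi l) => //.
by apply: FS; exists l.
Qed.

Lemma lpnorm_ub (T : choiceType) (p : \bar R) (S : set T) c l :
  1 <= p -> (forall l, 0 <= c l) -> S l -> c l <= lpnorm p S c.
Proof.
move=> hp c0 Sl; rewrite -(@lpnorm_set1 T p l c hp (c0 l)).
apply: (@lpnorm_le T T p [set l] S id c c) => //.
- by move=> _ [x xl <-]; rewrite xl.
Qed.

Lemma lpnorm_set0 (T : choiceType) (p : \bar R) c :
  1 <= p -> lpnorm p (set0 : set T) c = 0.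
Proof.
case: p => [r| |] //= hp.
  have r0 : r != 0%R by rewrite lee_fin in hp; apply/negP => /eqP r0; move: hp; rewrite r0 ler10.
  by rewrite esum_set0 poweR0r // invr_eq0.
by rewrite image_set0 setU0 ereal_sup1.
Qed.

Lemma lpnorm_fin (T : choiceType) (p : \bar R) (S : set T) c y :
  1 <= p -> (forall l, 0 <= c l) ->
  (forall F, finite_set F -> F `<=` S -> lpnorm p F c <= y) ->
  lpnorm p S c <= y.
Proof.
move=> hp c0 H.
have y0 : 0 <= y by rewrite -(@lpnorm_set0 T p c hp); apply: H => //; exact: finite_set0.
case: p hp H => [r| |] //= hp H.
  have r0 : (0 < r)%R by rewrite lee_fin in hp; apply: lt_le_trans hp.
  have rn0 : r != 0%R by rewrite gt_eqF.
  have key : \esum_(i in S) c i `^ r <= y `^ r.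
    apply: ge_ereal_sup => _ [X [fX XS] <-].
    rewrite -esum_fset //; last by move=> *; exact: poweR_ge0.
    have h := H X fX XS.
    rewrite -[X in X <= _](@poweRe1 _ (\esum_(i in X) c i `^ r)); last first.
      by apply: esum_ge0 => *; exact: poweR_ge0.
    rewrite -(mulVf rn0) poweRrM.
    apply: gt0_ler_poweR => //; first exact: ltW.
      by rewrite in_itv /= leey andbT poweR_ge0.
    by rewrite in_itv /= leey andbT.
  rewrite -[leRHS](@poweRe1 _ y) // -(mulfV rn0) poweRrM.
  apply: gt0_ler_poweR => //; first by rewrite invr_ge0 ltW.
    by rewrite in_itv /= leey andbT esum_ge0 // => *; exact: poweR_ge0.
  by rewrite in_itv /= leey andbT poweR_ge0.
apply: ge_ereal_sup => x [->//|[l Sl <-]].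
have := H [set l] (finite_set1 l) (fun x (xl : x = l) => eq_ind_r S Sl xl).
by rewrite image_set1 => h; apply: le_trans h; apply: ereal_sup_ubound; right.
Qed.


Lemma lpnorm_eq (T : choiceType) (p : \bar R) (S : set T) c c' :
  (forall l, S l -> c l = c' l) -> lpnorm p S c = lpnorm p S c'.
Proof.
move=> e; case: p => [r| |] //=; first by rewrite (eq_esum (b := fun i => c' i `^ r)) // => i /e ->.
by congr (ereal_sup (_ `|` _)); apply: eq_imagel => l Sl; exact: e.
Qed.

Lemma lpnorm_scale (T : choiceType) (p : \bar R) (F : set T) c (t u : R) :
  1 <= p -> finite_set F -> (0 < t)%R -> (forall l, 0 <= c l) ->
  lpnorm p F (fun l => t%:E * c l) <= (t * u)%:E -> lpnorm p F c <= u%:E.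
Proof.
move=> hp fF t0 c0.
case: p hp => [r| |] //= hp.
  have r0 : (0 < r)%R by rewrite lee_fin in hp; apply: lt_le_trans hp.
  have rn0 : r != 0%R by rewrite gt_eqF.
  move=> h.
  rewrite esum_fset // in h; last by move=> *; exact: poweR_ge0.
  rewrite (eq_fsbigr (fun i => t%:E `^ r * c i `^ r)) in h; last first.
    by move=> i _; rewrite poweRM // lee_fin ltW.
  rewrite -ge0_mule_fsumr in h; last by move=> *; exact: poweR_ge0.
  rewrite poweRM ?poweR_ge0 // in h; last by apply: fsume_ge0 => *; exact: poweR_ge0.
  rewrite -poweRrM mulfV // poweRe1 in h; last by rewrite lee_fin ltW.
  rewrite -esum_fset // in h; last by move=> *; exact: poweR_ge0.
  by rewrite EFinM lee_pmul2l // lte_fin in h.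
move=> h.
have tu0 : 0 <= (t * u)%:E by apply: le_trans h; exact: (@lpnorm_ge0 T +oo%E F (fun l => t%:E * c l)).
have u0 : (0 <= u)%R by rewrite lee_fin pmulr_rge0 in tu0.
move: h => /= h.
apply: ge_ereal_sup => x [->|[l Fl <-]]; first by rewrite lee_fin.
have : t%:E * c l <= (t * u)%:E.
  apply: le_trans h; apply: ereal_sup_ubound; right; by exists l.
by rewrite EFinM lee_pmul2l // lte_fin.
Qed.

End lp.


Section cluster.
Variable g : nat -> nat -> option nat.

Definition infset (P : set nat) := forall N, exists n, (N <= n)%N /\ P n.

Definition cstep (P : set nat) (c : nat) : option (option nat) :=
  match pselect (exists v, infset (P `&` [set n | g n c = v])) with
  | left h => Some (projT1 (cid h))
  | right _ => None
  end.

Definition cnext (P : set nat) (c : nat) : set nat :=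
  match cstep P c with
  | Some v => P `&` [set n | g n c = v]
  | None => P
  end.

Fixpoint Sb (c : nat) : set nat :=
  match c with 0 => setT | c'.+1 => cnext (Sb c') c' end.

Definition clim c := cstep (Sb c) c.

Lemma cnext_inf P c : infset P -> infset (cnext P c).
Proof.
rewrite /cnext /cstep; case: pselect => // h _.
exact: (projT2 (cid h)).
Qed.

Lemma Sb_inf c : infset (Sb c).
Proof.
elim: c => [|c IH] /=; first by move=> N; exists N.
exact: cnext_inf.
Qed.

Lemma Sb_mono c c' : (c <= c')%N -> Sb c' `<=` Sb c.
Proof.
move=> /subnK <-; elim: (c' - c)%N => [|k IH] //=.
move=> n /=; rewrite /cnext; case: cstep => [v [/IH]|/IH] //.
Qed.

Lemma clim_some c v : clim c = Some v -> Sb c.+1 `<=` [set n | g n c = v].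
Proof.
by rewrite /clim /= /cnext => ->; move=> n [].
Qed.

Lemma clim_none c : clim c = None -> forall M, exists B, forall n, (B <= n)%N ->
  Sb c n -> exists k, g n c = Some k /\ (M <= k)%N.
Proof.
rewrite /clim /cstep; case: pselect => // h _.
have hv : forall v, exists Nv, forall n, (Nv <= n)%N -> Sb c n -> g n c <> v.
  move=> v; apply: contrapT => hn; apply: h; exists v => N.
  apply: contrapT => hN; apply: hn; exists N => n Nn Sn gv; apply: hN.
  by exists n.
elim=> [|M [B HB]].
  have [B0 HB0] := hv None; exists B0 => n Bn Sn.
  case E: (g n c) => [k|]; first by exists k.
  by have := HB0 n Bn Sn.
have [B1 HB1] := hv (Some M); exists (maxn B B1) => n.
rewrite geq_max => /andP[Bn B1n] Sn.
have [k [gk Mk]] := HB n Bn Sn; exists k; split => //.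
rewrite ltn_neqAle Mk andbT; apply/eqP => Mk'.
by apply: (HB1 n B1n Sn); rewrite gk Mk'.
Qed.

Lemma cluster_prop : forall C N M, exists n, (N <= n)%N /\
  forall c, (c <= C)%N ->
    (forall v, clim c = Some v -> g n c = v) /\
    (clim c = None -> exists k, g n c = Some k /\ (M <= k)%N).
Proof.
move=> C N M.
have [B HB] : exists B, forall c, (c <= C)%N -> clim c = None ->
    forall n, (B <= n)%N -> Sb c n -> exists k, g n c = Some k /\ (M <= k)%N.
  elim: C => [|C [B HB]].
    case E: (clim 0) => [v|].
      by exists 0%N => c; rewrite leqn0 => /eqP ->; rewrite E.
    have [B0 HB0] := @clim_none 0 E M; exists B0 => c; rewrite leqn0 => /eqP -> _.
    exact: HB0.
  case E: (clim C.+1) => [v|].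
    exists B => c; rewrite leq_eqVlt => /orP[/eqP ->|]; first by rewrite E.
    exact: HB.
  have [B0 HB0] := @clim_none C.+1 E M; exists (maxn B B0) => c.
  rewrite leq_eqVlt => /orP[/eqP -> _ n|cC cN n].
    by rewrite geq_max => /andP[_]; exact: HB0.
  by rewrite geq_max => /andP[Bn _]; exact: HB.
have [n [Nn Sn]] := Sb_inf C.+1 (maxn N B).
move: Nn; rewrite geq_max => /andP[Nn Bn].
exists n; split => // c cC; split.
  move=> v cv; apply: (@clim_some c v cv).
  by apply: (@Sb_mono c.+1 C.+1).
move=> cn; apply: (HB c cC cn n Bn).
by apply: (@Sb_mono c C.+1) => //; exact: leqW.
Qed.

End cluster.

Lemma cluster (g : nat -> nat -> option nat) :
  exists lim : nat -> option (option nat), forall C N M, exists n, (N <= n)%N /\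
  forall c, (c <= C)%N ->
    (forall v, lim c = Some v -> g n c = v) /\
    (lim c = None -> exists k, g n c = Some k /\ (M <= k)%N).
Proof. exists (clim g); exact: cluster_prop. Qed.


Section basics.
Variables (R : realType) (X : Type) (d : X -> X -> \bar R) (A : set X).
Hypothesis hd : is_metric d.

Lemma d_ge0 x y : 0 <= d x y. Proof. by case: hd. Qed.
Lemma d_xx x : d x x = 0. Proof. by case: hd. Qed.
Lemma d_sym x y : d x y = d y x. Proof. by case: hd. Qed.
Lemma d_tri x y z : d x z <= d x y + d y z. Proof. by case: hd. Qed.

Lemma distA_le x a : A a -> distA d A x <= d x a.
Proof. by move=> Aa; apply: ereal_inf_lbound; exists a. Qed.

Lemma distA_ge0 x : 0 <= distA d A x.
Proof. by apply: le_ereal_inf_tmp => _ [a _ <-]; exact: d_ge0. Qed.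

Lemma distA_tri x y : distA d A x <= d x y + distA d A y.
Proof.
case Exy: (d x y) => [r| |]; last by have := d_ge0 x y; rewrite Exy.
  rewrite leNgt; apply/negP => H.
  move: H; rewrite -lteBrDl // => /ereal_inf_lt [_ [a Aa <-]].
  rewrite lteBrDl // => H.
  rewrite -Exy in H; have := le_lt_trans (d_tri x y a) H.
  by rewrite ltNge distA_le.
by rewrite addye ?leey // gt_eqF // (lt_le_trans _ (distA_ge0 y)) // ltNye.
Qed.


Lemma single_mL (al be : diagram X) m : dI al = [set 0%N] -> dI be = set0 ->
  is_matching A al be m -> mL al be m = [set inl (inr 0%N)].
Proof.
move=> ha hb [mKI _ mphiJ _ _].
have mK0 : forall k, ~ mK m k.
  by move=> k Kk; have := mphiJ (mphi m k) (ex_intro2 _ _ k Kk erefl); rewrite hb.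
apply/seteqP; split => [[[k|i]|j]|] /=.
- by move=> /mK0.
- by rewrite ha => -[-> _].
- by rewrite hb => -[].
- move=> _ ->; rewrite /mL /= ha; split => //; exact: mK0.
Qed.
Arguments single_mL {al be m}.


Lemma single_cost (p : \bar R) (al be : diagram X) m : 1 <= p ->
  dI al = [set 0%N] -> dI be = set0 ->
  is_matching A al be m -> cost d p al be m = d (dpt al 0) (mz m 0).
Proof.
move=> hp ha hb hm; rewrite /cost (single_mL ha hb hm) lpnorm_set1 //.
exact: d_ge0.
Qed.
Arguments single_cost {p al be m}.


Lemma single_match (al be : diagram X) a : A a -> dI al = [set 0%N] -> dI be = set0 ->
  is_matching A al be (Matching set0 id (fun _ => a) (fun _ => a)).
Proof.
move=> Aa ha hb; split => //=.
- by move=> y [x []].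
Qed.
Arguments single_match {al be a}.


Lemma Wp_single (p : \bar R) (al be : diagram X) a : 1 <= p -> A a ->
  dI al = [set 0%N] -> dI be = set0 -> Wp d A p al be <= d (dpt al 0) a.
Proof.
move=> hp Aa ha hb; apply: ereal_inf_lbound.
exists (Matching set0 id (fun _ => a) (fun _ => a)); first exact: single_match.
by rewrite single_cost //; exact: single_match.
Qed.
Arguments Wp_single {p al be a}.


Lemma Wp_empty (p : \bar R) (al be : diagram X) : 1 <= p ->
  dI al = set0 -> dI be = set0 -> Wp d A p al be = 0.
Proof.
move=> hp ha hb; apply/le_anti/andP; split; last first.
  apply: le_ereal_inf_tmp => _ [m _ <-]; exact: lpnorm_ge0.
apply: ereal_inf_lbound.
exists (Matching set0 id (fun _ => dpt al 0) (fun _ => dpt al 0)).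
  split => //=; do ?[by move=> ? ? [] | by move=> y [x []] | by move=> i; rewrite ha | by move=> j; rewrite hb].
rewrite /cost (_ : mL _ _ _ = set0) ?lpnorm_set0 //.
apply/seteqP; split => [[[k|i]|j]|] //=; [by rewrite ha => -[]|by rewrite hb => -[]].
Qed.
Arguments Wp_empty {p al be}.


Lemma dir1 (p : \bar R) : 1 <= p ->
  (forall al be : diagram X, in_Dp d A p al -> in_Dp d A p be -> Wp d A p al be < +oo ->
      exists m : matching X, optimal_matching d A p al be m) ->
  distance_minimizing d A.
Proof.
move=> hp H x xfin.
have [Ax|Ax] := pselect (A x).
  exists x => //; rewrite d_xx; apply/le_anti/andP; split; last exact: distA_ge0.
  by rewrite -(d_xx x); exact: distA_le.
have [_ [a Aa <-] dxa] := ereal_inf_lt xfin.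
pose al := Diagram [set 0%N] (fun _ => x).
pose be := Diagram set0 (fun _ => x).
have Wle : Wp d A p al be <= distA d A x.
  apply: le_ereal_inf_tmp => _ [a' Aa' <-].
  exact: (Wp_single hp Aa').
have isda : is_diagram A al.
  split => [i _ //|y]; apply: sub_finite_set (finite_set1 0%N).
  by move=> i [].
have isdb : is_diagram A be by split => [i []|y]; apply: sub_finite_set (finite_set0 nat) => i [].
have [m [hm cm]] : exists m, optimal_matching d A p al be m.
  apply: H.
  - split => //; case: p hp {Wle} => [r| |] //= hp.
      split; first by apply: sub_finite_set (finite_set1 0%N) => i [].
      apply: (le_lt_trans (Wp_single hp Aa _ _)) => //.
      by apply/seteqP; split => [i [->]|i ->] //=.
    by move=> e _; apply: sub_finite_set (finite_set1 0%N) => i [].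
  - split => //; case: p hp {Wle} => [r| |] //= hp.
      split; first by apply: sub_finite_set (finite_set0 nat) => i [].
      by rewrite Wp_empty //; apply/seteqP; split => [i []|i []].
    by move=> e _; apply: sub_finite_set (finite_set0 nat) => i [].
  - exact: le_lt_trans Wle xfin.
have [_ _ _ hz _] := hm.
have Az : A (mz m 0).
  apply: hz => // Km; have [_ _ hJ _ _] := hm.
  exact: (hJ _ (ex_intro2 _ _ 0%N Km erefl)).
exists (mz m 0) => //; apply/le_anti/andP; split; first exact: distA_le.
by rewrite -(single_cost hp _ _ hm) // cm.
Qed.

End basics.


Lemma fin_bound (T : choiceType) (F : set T) (f : T -> nat) :
  finite_set F -> exists M, forall l, F l -> (f l < M)%N.
Proof.
move=> /finite_fsetP [Y ->]; exists (\max_(l <- finmap.enum_fset Y) f l).+1 => l Yl.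
by rewrite ltnS; apply: (@leq_bigmax_seq _ (finmap.enum_fset Y) xpredT f l).
Qed.

Lemma esum_inf_big (R : realType) (T : choiceType) (S : set T) (f : T -> \bar R) (e : R) :
  (0 < e)%R -> infinite_set S -> (forall x, S x -> e%:E <= f x) ->
  (forall x, 0 <= f x) -> \esum_(i in S) f i = +oo.
Proof.
move=> e0 infS fe f0.
have claim : forall n : nat, exists X, [/\ finite_set X, X `<=` S &
    ((n%:R * e)%:E <= \sum_(i \in X) f i)].
  elim=> [|n [X [fX XS HX]]].
    by exists set0; split => //; rewrite mul0r fsbig_set0.
  have [y [Sy Xy]] : exists y, S y /\ ~ X y.
    apply: contrapT => h; apply: infS; apply: sub_finite_set fX => y Sy.
    by apply: contrapT => Xy; apply: h; exists y.
  exists (y |` X).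
  have fyX : finite_set (y |` X) by rewrite finite_setU; split => //; exact: finite_set1.
  have yXS : (y |` X) `<=` S by move=> z [->|/XS].
  split => //.
  rewrite (fsbigD1 y) //; last by left.
  rewrite (_ : (y |` X) `\ y = X); last first.
    apply/seteqP; split => [z [[->|//] /= zy]|z Xz]; first by exfalso; apply: zy.
    by split; [right|move=> /= zy; apply: Xy; rewrite -zy].
  by rewrite -nat1r mulrDl mul1r EFinD leeD // fe.
have le : forall n : nat, (n%:R * e)%:E <= \esum_(i in S) f i.
  move=> k; have [X [fX XS HX]] := claim k.
  apply: esum_ge; exists X => //.
case E: (\esum_(i in S) f i) => [s| |] //.
  have := le (Num.truncn (s / e)).+1; rewrite E lee_fin => H.
  have := Num.Theory.truncnS_gt (s / e); rewrite ltr_pdivrMr // => H2.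
  by have := lt_le_trans H2 H; rewrite ltxx.
by have := @esum_ge0 R T S f (fun x _ => f0 x); rewrite E.
Qed.

Lemma tail (R : realType) (X : Type) (d : X -> X -> \bar R) (A : set X) (p : \bar R)
  (hd : is_metric d) (hp : 1 <= p) (ga : diagram X) :
  in_Dp d A p ga -> forall e : R, (0 < e)%R ->
  exists M, forall i, dI ga i -> (M <= i)%N -> distA d A (dpt ga i) < e%:E.
Proof.
move=> [isd hg] e e0.
suff fG : finite_set [set i | dI ga i /\ e%:E <= distA d A (dpt ga i)].
  have [M HM] := @fin_bound nat _ id fG; exists M => i Ii Mi.
  rewrite ltNge; apply/negP => h.
  by have := HM i (conj Ii h); rewrite ltnNge Mi.
case: p hp hg => [r| |] //= hp hg; last exact: hg e e0.
have r0 : (0 < r)%R by rewrite lee_fin in hp; apply: lt_le_trans hp.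
case: hg => fu hl.
have [_ [m hm <-] cm] := ereal_inf_lt hl.
pose G' := [set i | dI (lower_part d A +oo ga) i /\ e%:E <= distA d A (dpt ga i)].
apply: (@sub_finite_set _ _ (dI (upper_part d A +oo ga) `|` G')).
  move=> i [Ii ei]; have [fin|nfin] := pselect (distA d A (dpt ga i) < +oo).
    by right.
  by left; split => //; move: nfin; rewrite ltNge => /negP/negPn.
rewrite finite_setU; split => //.
apply: contrapT => infG.
have mK0 : forall k, ~ mK m k.
  by move=> k Kk; have [_ _ hJ _ _] := hm; have := hJ _ (ex_intro2 _ _ k Kk erefl).
move: cm; rewrite /cost /lpnorm => cm.
have : \esum_(l in mL (lower_part d A +oo ga) (zero_like (lower_part d A +oo ga)) m)
   (d (mpair (lower_part d A +oo ga) (zero_like (lower_part d A +oo ga)) m l).1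
      (mpair (lower_part d A +oo ga) (zero_like (lower_part d A +oo ga)) m l).2) `^ r < +oo.
  by apply: lty_poweRy cm; rewrite invr_eq0 gt_eqF.
apply/negP; rewrite -leNgt.
have sub : (fun i => inl (inr i)) @` G' `<=` mL (lower_part d A +oo ga) (zero_like (lower_part d A +oo ga)) m.
  by move=> _ [i [Ii _] <-]; split => //; exact: mK0.
apply: le_trans; last exact: (@esum_subset R _ _ _ _ sub).
rewrite esum_image; last by move=> x y _ _ [].
rewrite (@esum_inf_big R nat G' _ (e `^ r)) //.
- by rewrite powR_gt0.
- move=> i [Ii ei] /=; rewrite -poweR_EFin; apply: gt0_ler_poweR; first exact: ltW.
  + by rewrite in_itv /= leey andbT lee_fin ltW.
  + by rewrite in_itv /= leey andbT d_ge0.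
  apply: le_trans ei _; apply: distA_le.
  by have [_ _ _ hz _] := hm; apply: hz => //; exact: mK0.
- by move=> x; exact: poweR_ge0.
Qed.


Lemma key_ineq (R : realType) (t e : R) (x D y : \bar R) :
  (0 <= t)%R -> 0 <= x -> 0 <= D -> 0 <= y -> x <= D + y -> y < e%:E ->
  e%:E <= (1 - t)%:E * x -> t%:E * x <= D.
Proof.
move=> t0 x0 D0 y0 xDy ye exe.
case: D xDy D0 => [r| |] xDy D0; last by [];  last by rewrite leey.
case: y y0 ye xDy => [q| |] y0 ye xDy; [|by rewrite ltNge leey in ye|by []].
case: x x0 exe xDy => [s| |] x0 exe xDy; last by [].
  rewrite -EFinM lee_fin.
  rewrite -EFinM lee_fin in exe.
  rewrite -EFinD lee_fin in xDy.
  rewrite lte_fin in ye.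
  rewrite lee_fin in x0; rewrite lee_fin in D0; rewrite lee_fin in y0.
  have : (t * s <= s - e)%R by lra.
  move=> h; lra.
by rewrite -EFinD leNgt ltey in xDy.
Qed.

Lemma eps_exists (R : realType) (s : R) (x : \bar R) :
  (0 < s)%R -> 0 < x -> exists2 e : R, (0 < e)%R & e%:E <= s%:E * x.
Proof.
move=> s0; case: x => [r| |] // r0.
  by exists (s * r)%R; [rewrite mulr_gt0 // -lte_fin|rewrite EFinM].
by exists 1%R => //; rewrite gt0_muley ?leey // lte_fin.
Qed.

Lemma tle (R : realType) (t : R) (x : \bar R) : (0 <= t <= 1)%R -> 0 <= x -> t%:E * x <= x.
Proof.
move=> /andP[t0 t1]; case: x => [r| |] //= r0.
  by rewrite -EFinM lee_fin ler_piMl.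
by rewrite leey.
Qed.


Definition gm (X : Type) (ms : nat -> matching X) (n c : nat) : option nat :=
  if odd c then
    match pselect (exists i, mK (ms n) i /\ mphi (ms n) i = c./2) with
    | left h => Some (projT1 (cid h))
    | right _ => None
    end
  else if pselect (mK (ms n) c./2) then Some (mphi (ms n) c./2) else None.
Arguments gm {X}.

Lemma gm_even X ms n i : @gm X ms n i.*2 =
  if pselect (mK (ms n) i) then Some (mphi (ms n) i) else None.
Proof. by rewrite /gm odd_double doubleK. Qed.
Arguments gm_even {X ms n i}.


Lemma gm_odd_some X ms n j i : @gm X ms n j.*2.+1 = Some i ->
  mK (ms n) i /\ mphi (ms n) i = j.
Proof.
rewrite /gm /= odd_double /= uphalf_double.
case: pselect => // h [<-]; exact: (projT2 (cid h)).
Qed.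
Arguments gm_odd_some {X ms n j i}.


Lemma gm_odd_none X ms n j : @gm X ms n j.*2.+1 = None ->
  ~ exists i, mK (ms n) i /\ mphi (ms n) i = j.
Proof.
by rewrite /gm /= odd_double /= uphalf_double; case: pselect.
Qed.
Arguments gm_odd_none {X ms n j}.


Lemma gm_even_some X ms n i k : @gm X ms n i.*2 = Some k -> mK (ms n) i /\ mphi (ms n) i = k.
Proof. by rewrite gm_even; case: pselect => // h [<-]. Qed.
Arguments gm_even_some {X ms n i k}.

Lemma gm_even_none X ms n i : @gm X ms n i.*2 = None -> ~ mK (ms n) i.
Proof. by rewrite gm_even; case: pselect. Qed.
Arguments gm_even_none {X ms n i}.

Lemma gm_even_K X ms n i : mK (ms n) i -> @gm X ms n i.*2 = Some (mphi (ms n) i).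
Proof. by move=> Ki; rewrite gm_even; case: pselect. Qed.
Arguments gm_even_K {X ms n i}.

Definition coord (l : nat + nat + nat) : nat :=
  match l with inl (inl k) => k.*2 | inl (inr i) => i.*2 | inr j => j.*2.+1 end.

Section main.
Variables (R : realType) (X : Type) (d : X -> X -> \bar R) (A : set X) (p : \bar R).
Hypotheses (hd : is_metric d) (hcl : metric_closed d A) (hdm : distance_minimizing d A)
  (hp : 1 <= p).
Variables (al be : diagram X).
Hypotheses (ha : in_Dp d A p al) (hb : in_Dp d A p be) (hW : Wp d A p al be < +oo).
Variable w : R.
Hypothesis hWw : Wp d A p al be = w%:E.
Variable ms : nat -> matching X.
Hypothesis hms : forall n, is_matching A al be (ms n) /\
  cost d p al be (ms n) <= (w + n.+1%:R^-1)%:E.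
Variable lim : nat -> option (option nat).
Hypothesis hlim : forall C N M, exists n, (N <= n)%N /\
  forall c, (c <= C)%N ->
    (forall v, lim c = Some v -> gm ms n c = v) /\
    (lim c = None -> exists k, gm ms n c = Some k /\ (M <= k)%N).

Local Notation a i := (distA d A (dpt al i)).
Local Notation b j := (distA d A (dpt be j)).

Definition Kst i := exists j, lim i.*2 = Some (Some j).
Definition phist i := if lim i.*2 is Some (Some j) then j else 0%N.

Lemma consist i j : lim j.*2.+1 = Some (Some i) -> lim i.*2 = Some (Some j).
Proof.
move=> hj.
have [n [_ H]] := hlim (maxn i.*2 j.*2.+1) 0 j.+1.
have [Hj _] := H j.*2.+1 (leq_maxr _ _).
have [Ki ei] := gm_odd_some (Hj _ hj).
have [Hi Hi'] := H i.*2 (leq_maxl _ _).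
have gi : gm ms n i.*2 = Some j by rewrite gm_even; case: pselect => [k|/(_ Ki)//]; rewrite ei.
case E: (lim i.*2) => [v|].
  by rewrite -(Hi _ E) gi.
have [k [gk jk]] := Hi' E; move: gk; rewrite gi => -[kj].
by rewrite -kj ltnn in jk.
Qed.
Arguments consist {i j}.



Definition cst (l : nat + nat + nat) : \bar R :=
  match l with
  | inl (inl k) => d (dpt al k) (dpt be (phist k))
  | inl (inr i) => a i
  | inr j => b j
  end.

Lemma cst_ge0 l : 0 <= cst l.
Proof. by case: l => [[k|i]|j] /=; [exact: d_ge0|exact: distA_ge0|exact: distA_ge0]. Qed.

Definition pi (x : X) : X :=
  match pselect (exists2 a, A a & distA d A x = d x a) with
  | left h => s2val (cid2 h)
  | right _ => x
  end.

Lemma pi_spec x : distA d A x < +oo -> A (pi x) /\ distA d A x = d x (pi x).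
Proof.
move=> /hdm h; rewrite /pi; case: pselect => // h'.
by case: (cid2 h') => y /= Ay ->.
Qed.

Definition mst := Matching Kst phist (fun i => pi (dpt al i)) (fun j => pi (dpt be j)).

Lemma pos_dist (ga : diagram X) i : is_diagram A ga -> dI ga i -> 0 < distA d A (dpt ga i).
Proof.
move=> [h _] Ii; rewrite lt_neqAle distA_ge0 // andbT.
by apply/eqP => e; apply: (h i Ii); apply: hcl; rewrite -e.
Qed.

Lemma W_ge0 : (0 <= w)%R.
Proof.
have : 0 <= Wp d A p al be by apply: le_ereal_inf_tmp => _ [m _ <-]; exact: lpnorm_ge0.
by rewrite hWw lee_fin.
Qed.

Lemma main_fin F : finite_set F -> F `<=` mL al be mst -> lpnorm p F cst <= w%:E.
Proof.
move=> fF FL.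
apply/lee_addgt0Pr => eps eps0.
have w0 := W_ge0.
pose u := (w + eps)%R; pose del := (eps / 2)%R; pose t := ((w + del) / u)%R.
have del0 : (0 < del)%R by rewrite divr_gt0.
have u0 : (0 < u)%R by rewrite /u; lra.
have t0 : (0 < t)%R by rewrite divr_gt0 //; lra.
have t1 : (t < 1)%R by rewrite ltr_pdivrMr // mul1r /u /del; lra.
have tu : (t * u = w + del)%R by rewrite /t divfK // gt_eqF.
have t1p : (0 < 1 - t)%R by lra.
rewrite -EFinD -/u.
apply: (@lpnorm_scale R _ p F cst t u hp fF t0 cst_ge0).
have hP : forall l, exists B : nat, F l -> [/\ (coord l < B)%N,
     (forall i k, l = inl (inr i) -> dI be k -> (B <= k)%N ->
         t%:E * a i <= d (dpt al i) (dpt be k)) &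
     (forall j i, l = inr j -> dI al i -> (B <= i)%N ->
         t%:E * b j <= d (dpt al i) (dpt be j))].
  move=> l; have [Fl|nFl] := pselect (F l); last by exists 0%N.
  case: l Fl => [[k|i]|j] Fl.
  - by exists (k.*2).+1 => _; split.
  - have [Ii nK] := FL _ Fl.
    have [e e0 he] := @eps_exists R (1 - t)%R (a i) t1p (@pos_dist al i (proj1 ha) Ii).
    have [M HM] := @tail R X d A p hd hp be hb e e0.
    exists (maxn (i.*2).+1 M) => _; split => //; first by rewrite leq_max ltnSn.
    move=> i' k [<-] Jk Mk.
    apply: (@key_ineq R t e (a i) _ (b k)) => //.
    + exact: ltW.
    + exact: distA_ge0.
    + exact: d_ge0.
    + exact: distA_ge0.
    + exact: distA_tri.
    + by apply: HM => //; apply: leq_trans Mk; exact: leq_maxr.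
  - have [Jj nK] := FL _ Fl.
    have [e e0 he] := @eps_exists R (1 - t)%R (b j) t1p (@pos_dist be j (proj1 hb) Jj).
    have [M HM] := @tail R X d A p hd hp al ha e e0.
    exists (maxn (j.*2).+2 M) => _; split => //; first by rewrite leq_max ltnSn.
    move=> j' i [<-] Ii Mi.
    apply: (@key_ineq R t e (b j) _ (a i)) => //.
    + exact: ltW.
    + exact: distA_ge0.
    + exact: d_ge0.
    + exact: distA_ge0.
    + by rewrite (@d_sym R X d hd); exact: distA_tri.
    + by apply: HM => //; apply: leq_trans Mi; exact: leq_maxr.
have [bnd Hbnd] := choice hP.
have [M HM] := @fin_bound _ F bnd fF.
have HcM : forall l, F l -> (coord l < M)%N.
  by move=> l Fl; have [h _ _] := Hbnd l Fl; apply: ltn_trans h (HM l Fl).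
have Hai : forall i k, F (inl (inr i)) -> dI be k -> (M <= k)%N ->
    t%:E * a i <= d (dpt al i) (dpt be k).
  move=> i k Fl Jk Mk; have [_ h _] := Hbnd _ Fl; apply: h => //.
  by apply: leq_trans Mk; apply: ltnW; exact: HM.
have Hbj : forall j i, F (inr j) -> dI al i -> (M <= i)%N ->
    t%:E * b j <= d (dpt al i) (dpt be j).
  move=> j i Fl Ii Mi; have [_ _ h] := Hbnd _ Fl; apply: h => //.
  by apply: leq_trans Mi; apply: ltnW; exact: HM.
have [N0 HN0] : exists N0, forall n, (N0 <= n)%N -> (n.+1%:R^-1 <= del)%R.
  exists (Num.truncn del^-1) => n Nn.
  rewrite invf_ple ?posrE ?ltr0Sn //.
  apply: ltW; apply: lt_le_trans (Num.Theory.truncnS_gt _) _.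
  by rewrite ler_nat ltnS.
have [n [Nn Hn]] := hlim M N0 M.
have [hmn hcn] := hms n.
pose cn := fun l => d (mpair al be (ms n) l).1 (mpair al be (ms n) l).2.
pose psi := fun l : nat + nat + nat => match l with
  | inl (inl k) => l
  | inl (inr i) => if lim i.*2 is None then inl (inl i) else l
  | inr j => if lim j.*2.+1 is None then
               (if gm ms n j.*2.+1 is Some i then inl (inl i) else l) else l
  end.
have Hc : forall l, F l ->
    (forall v, lim (coord l) = Some v -> gm ms n (coord l) = v) /\
    (lim (coord l) = None -> exists k, gm ms n (coord l) = Some k /\ (M <= k)%N).
  by move=> l Fl; apply: Hn; apply: ltnW; exact: HcM.
have [hK hinj hJ hz hw] := hmn.
have tl : (0 <= t <= 1)%R by rewrite (ltW t0) (ltW t1).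
have key1 : forall l, F l -> mL al be (ms n) (psi l) /\ t%:E * cst l <= cn (psi l).
  move=> l Fl; have [Hs Hnone] := Hc l Fl; have Ll := FL _ Fl.
  rewrite /psi /cn.
  case: l Fl Hs Hnone Ll => [[k|i]|j] Fl /= Hs Hnone Ll.
  - have [j E] := Ll.
    have [Kk ek] := gm_even_some (Hs _ E).
    split => //.
    rewrite ek /phist E; apply: (@tle R t) => //; exact: d_ge0.
  - have [Ii nK] := Ll.
    case E: (lim i.*2) => [[j|]|].
    + by exfalso; apply: nK; exists j.
    + have nKn := gm_even_none (Hs _ E).
      split; first by split.
      apply: le_trans (@tle R t _ tl (@distA_ge0 R X d A hd _)) _.
      exact: distA_le (hz i Ii nKn).
    + have [k [gk Mk]] := Hnone E.
      have [Kn ek] := gm_even_some gk.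
      split => //=; rewrite ek; apply: Hai => //.
      by apply: hJ; exists i.
  - have [Jj nK] := Ll.
    case E: (lim j.*2.+1) => [[i|]|].
    + exfalso; apply: nK; exists i; first by exists j; exact: consist E.
      by rewrite /phist (consist E).
    + have nex := gm_odd_none (Hs _ E).
      have nJ : ~ [set mphi (ms n) x | x in mK (ms n)] j.
        by move=> [i Ki ei]; apply: nex; exists i.
      split; first by split.
      apply: le_trans (@tle R t _ tl (@distA_ge0 R X d A hd _)) _.
      rewrite (@d_sym R X d hd); exact: distA_le (hw j Jj nJ).
    + have [i [gi Mi]] := Hnone E.
      have [Ki ei] := gm_odd_some gi.
      rewrite gi /=; split => //; rewrite ei; apply: Hbj => //.
      exact: hK.
pose keyf := fun l' : nat + nat + nat => match l' with
  | inl (inl i) => if pselect (F (inl (inl i)) /\ Kst i) then inl (inl i)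
      else if pselect (F (inl (inr i)) /\ lim i.*2 = None) then inl (inr i)
      else inr (mphi (ms n) i)
  | _ => l'
  end.
have key2 : forall l, F l -> keyf (psi l) = l.
  move=> l Fl; have [Hs Hnone] := Hc l Fl; have Ll := FL _ Fl.
  rewrite /psi /keyf.
  case: l Fl Hs Hnone Ll => [[k|i]|j] Fl /= Hs Hnone Ll.
  - by case: pselect => [a|h]; [by []|exfalso; apply: h; split].
  - case E: (lim i.*2) => [v|] //=.
    case: pselect => [[Fa [j Ej]]|nh]; first by exfalso; have := Ej; rewrite E.
    by case: pselect => [a|h]; [by []|exfalso; apply: h; split].
  - case E: (lim j.*2.+1) => [v|] //=.
    have [i [gi Mi]] := Hnone E; rewrite gi /=.
    case: pselect => [[Fi Fi2]|nh].
      by have := HcM _ Fi; rewrite /= -addnn => h; have := leq_trans Mi (leq_addr i i); rewrite leqNgt h.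
    case: pselect => [[Fi Fi2]|nh2].
      by have := HcM _ Fi; rewrite /= -addnn => h; have := leq_trans Mi (leq_addr i i); rewrite leqNgt h.
    by have [_ ei] := gm_odd_some gi; rewrite ei.
apply: (@le_trans _ _ (lpnorm p (mL al be (ms n)) cn)).
  apply: (@lpnorm_le R _ _ p F (mL al be (ms n)) psi (fun l => t%:E * cst l) cn hp).
  - move=> x y /set_mem Fx /set_mem Fy e.
    by rewrite -(key2 x Fx) -(key2 y Fy) e.
  - by move=> _ [l Fl <-]; exact: (key1 l Fl).1.
  - by move=> l; exact: d_ge0.
  - by move=> l _; apply: mule_ge0; [rewrite lee_fin ltW|exact: cst_ge0].
  - by move=> l Fl; exact: (key1 l Fl).2.
have -> : lpnorm p (mL al be (ms n)) cn = cost d p al be (ms n) by [].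
apply: le_trans hcn _.
by rewrite lee_fin tu lerD2l; exact: HN0.
Qed.


Lemma main_all : lpnorm p (mL al be mst) cst <= w%:E.
Proof.
apply: lpnorm_fin => //; first exact: cst_ge0.
by move=> F fF FL; exact: main_fin.
Qed.

Lemma lt_W l : mL al be mst l -> cst l < +oo.
Proof.
move=> Ll; apply: le_lt_trans (@lpnorm_ub R _ p _ cst l hp cst_ge0 Ll) _.
by apply: le_lt_trans main_all _; rewrite ltry.
Qed.
Arguments lt_W {l}.


Lemma lim_match i j : lim i.*2 = Some (Some j) ->
  exists n, mK (ms n) i /\ mphi (ms n) i = j.
Proof.
move=> E; have [n [_ H]] := hlim i.*2 0 0.
have [Hs _] := H i.*2 (leqnn _).
by exists n; exact: gm_even_some (Hs _ E).
Qed.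
Arguments lim_match {i j}.


Lemma mst_matching : is_matching A al be mst.
Proof.
split.
- move=> i [j E]; have [n [Ki _]] := lim_match E.
  by have [hK _ _ _ _] := (hms n).1; exact: hK.
- move=> i i' [j E] [j' E'] /=; rewrite /phist E E' => ejj.
  have [n [_ H]] := hlim (maxn i.*2 i'.*2) 0 0.
  have [Ki ei] := gm_even_some ((H i.*2 (leq_maxl _ _)).1 _ E).
  have [Ki' ei'] := gm_even_some ((H i'.*2 (leq_maxr _ _)).1 _ E').
  have [_ hinj _ _ _] := (hms n).1; apply: hinj => //.
  by rewrite ei ei' ejj.
- move=> _ [i [j E] <-] /=; rewrite /phist E.
  have [n [Ki ei]] := lim_match E.
  by have [_ _ hJ _ _] := (hms n).1; apply: hJ; exists i.
- move=> i Ii nK /=.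
  have h : mL al be mst (inl (inr i)) by split.
  exact: (@pi_spec (dpt al i) (lt_W h)).1.
- move=> j Jj nJ /=.
  have h : mL al be mst (inr j) by split.
  exact: (@pi_spec (dpt be j) (lt_W h)).1.
Qed.

Lemma mst_opt : optimal_matching d A p al be mst.
Proof.
split; first exact: mst_matching.
have ce : cost d p al be mst = lpnorm p (mL al be mst) cst.
  apply: lpnorm_eq => -[[k|i]|j] //= h.
  - by rewrite -(@pi_spec (dpt al i) (@lt_W (inl (inr i)) h)).2.
  - by rewrite (@d_sym R X d hd) -(@pi_spec (dpt be j) (@lt_W (inr j) h)).2.
apply/le_anti/andP; split; first by rewrite ce hWw; exact: main_all.
by apply: ereal_inf_lbound; exists mst => //; exact: mst_matching.
Qed.

End main.

Lemma dir2 (R : realType) (X : Type) (d : X -> X -> \bar R) (A : set X) (p : \bar R) :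
  metric_pair d A -> 1 <= p -> distance_minimizing d A ->
  forall al be : diagram X,
      in_Dp d A p al -> in_Dp d A p be -> Wp d A p al be < +oo ->
      exists m : matching X, optimal_matching d A p al be m.
Proof.
move=> [hd hcl] hp hdm al be ha hb hW.
have W0 : 0 <= Wp d A p al be.
  by apply: le_ereal_inf_tmp => _ [m _ <-]; exact: lpnorm_ge0.
have hWw : Wp d A p al be = (fine (Wp d A p al be))%:E.
  by rewrite fineK // ge0_fin_numE.
set w := fine _ in hWw.
have hex : forall n : nat, exists m : matching X, is_matching A al be m /\
    cost d p al be m <= (w + n.+1%:R^-1)%:E.
  move=> n.
  have : Wp d A p al be < (w + n.+1%:R^-1)%:E.
    by rewrite hWw lte_fin ltrDl invr_gt0 ltr0Sn.
  move=> /ereal_inf_lt [_ [m hm <-] cm]; exists m; split => //; exact: ltW.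
have [ms hms] := choice hex.
have [lim hlim] := cluster (gm ms).
by eexists; exact: (@mst_opt R X d A p hd hcl hdm hp al be ha hb w hWw ms hms lim hlim).
Qed.


Theorem theorem4p8 (R : realType) (X : Type) (d : X -> X -> \bar R) (A : set X)
    (p : \bar R) :
  metric_pair d A -> 1 <= p ->
  ((forall al be : diagram X,
      in_Dp d A p al -> in_Dp d A p be -> Wp d A p al be < +oo ->
      exists m : matching X, optimal_matching d A p al be m)
   <-> distance_minimizing d A).
Proof.
move=> hm hp; split.
  by move=> H; exact: (@dir1 R X d A (proj1 hm) p hp H).
by move=> hdm; exact: (@dir2 R X d A p hm hp hdm).
Qed.
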